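(* Let $u\in V$ satisfy $\operatorname{dist}(u,\mathcal M)\le\varepsilon_{model}$. Let $w=P_Wu+\eta$ with $\eta\in W$ and $\|\eta\|\le\varepsilon_{noise}$. Let $(u^*,y^* )\in(w+W^\perp)\times Y$ be a global minimizer of $(v,y)\mapsto\mathcal R(v,y)$ over $(w+W^\perp)\times Y$. Then, with $\varepsilon:=\kappa(\varepsilon_{model}+\varepsilon_{noise})$ and $\kappa=R/r$, $$\|u^*-u(y^* )\|\le\varepsilon\qquad\text{and}\qquad\|u-u^*\|\le\varepsilon_{noise}+\delta_\varepsilon\le2\delta_\varepsilon.$$ In particular, if $u\in\mathcal M$ and $\eta=0$, then $\|u-u^*\|\le\delta_0$.
   Context: Let $V$ and $Z$ be real Hilbert spaces, with $\|\cdot\|$ the norm of $V$ and $Z'$ the dual of $Z$. Let $Y\subset\mathbb R^d$ be compact. For $y\in Y$ let $A(y):V\to Z'$ be a bounded linear isomorphism and $f(y)\in Z'$, with $y\mapsto A(y)$ and $y\mapsto f(y)$ continuous. Assume there are constants $0<r\le R$ such that $\|A(y)\|_{V\to Z'}\le R$ and $\|A(y)^{-1}\|_{Z'\to V}\le r^{-1}$ for all $y\in Y$. Let $u(y)=A(y)^{-1}f(y)$ and $\mathcal M=\{u(y):y\in Y\}$. Define the residual $\mathcal R(v,y)=\|A(y)v-f(y)\|_{Z'}$. Let $W\subset V$ be a subspace of finite dimension $m$, let $P_W$ be the orthogonal projection onto $W$, and let $W^\perp$ be its orthogonal complement. Assume $W^\perp\ne\{0\}$. For $\sigma\ge0$ define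 $\mathcal M_\sigma=\{v:\operatorname{dist}(v,\mathcal M)\le\sigma\}$ and $\delta_\sigma=\sup\{\|u-v\|:u,v\in\mathcal M_\sigma,u-v\in W^\perp\}$. *)

(* Defs.v *)
From mathcomp Require Import all_boot all_order all_algebra.
From mathcomp Require Import all_classical all_reals all_analysis.
Set Implicit Arguments. Unset Strict Implicit. Unset Printing Implicit Defensive.
Import Order.TTheory GRing.Theory Num.Theory.
Import numFieldNormedType.Exports.
Local Open Scope classical_set_scope.
Local Open Scope ring_scope.

Section Defs.
Context {R : realType}.

Definition inner_product_of_norm (V : normedModType R) (ip : V -> V -> R) : Prop :=
  (forall x y, ip x y = ip y x) /\
  (forall (a : R) x y z, ip (a *: x + y) z = a * ip x z + ip y z) /\
  (forall x, `|x| = Num.sqrt (ip x x)).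

Definition finite_dim_subspace (V : lmodType R) (W : set V) (m : nat) : Prop :=
  exists b : 'I_m -> V,
    (forall c : 'I_m -> R, \sum_(i < m) c i *: b i = 0 -> forall i, c i = 0) /\
    (forall v, W v <-> exists c : 'I_m -> R, v = \sum_(i < m) c i *: b i).

Definition orth_compl (V : lmodType R) (ip : V -> V -> R) (W : set V) : set V :=
  [set v | forall x, W x -> ip v x = 0].

Definition is_orth_proj (V : lmodType R) (ip : V -> V -> R) (W : set V) (P : V -> V) :=
  forall v, W (P v) /\ orth_compl ip W (v - P v).

(* elements of the dual Z' : bounded linear functionals on Z *)
Definition bounded_functional (Z : normedModType R) (phi : Z -> R) : Prop :=
  (forall (a : R) x y, phi (a *: x + y) = a * phi x + phi y) /\
  (exists C : R, forall z, `|phi z| <= C * `|z|).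

Definition dual_norm (Z : normedModType R) (phi : Z -> R) : R :=
  sup [set `|phi z| | z in [set z : Z | `|z| <= 1]].

Definition residual (V : normedModType R) (Z : normedModType R) (d : nat)
  (A : 'rV[R]_d -> V -> Z -> R) (f : 'rV[R]_d -> Z -> R) (v : V) (y : 'rV[R]_d) : R :=
  dual_norm (fun z => A y v z - f y z).

(* dist(v, S), in the extended reals (S may be empty) *)
Definition dist_set (V : normedModType R) (S : set V) (v : V) : \bar R :=
  ereal_inf [set (`|v - x|)%:E | x in S].

Definition fattening (V : normedModType R) (M : set V) (sigma : R) : set V :=
  [set v | (dist_set M v <= sigma%:E)%E].

Definition delta_width (V : normedModType R) (ip : V -> V -> R) (W : set V)
  (M : set V) (sigma : R) : \bar R :=
  ereal_sup [set x | exists a b, fattening M sigma a /\ fattening M sigma b /\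
                       orth_compl ip W (a - b) /\ x = (`|a - b|)%:E].

End Defs.

(* Main.v *)
Require Import Defs.
From mathcomp Require Import all_boot all_order all_algebra.
From mathcomp Require Import all_classical all_reals all_analysis.
Import Order.TTheory GRing.Theory Num.Theory.
Import numFieldNormedType.Exports.
Local Open Scope classical_set_scope.
Local Open Scope ring_scope.

From mathcomp Require Import lra ring.
Section Aux.
Context {R : realType} {V : normedModType R} (ip : V -> V -> R)
  (Hip : inner_product_of_norm ip).

Lemma ipDl x y z : ip (x + y) z = ip x z + ip y z.
Proof. case: Hip => _ [H _]. by rewrite -[x in LHS]scale1r H mul1r. Qed.

Lemma ip0l z : ip 0 z = 0.
Proof. have h := ipDl 0 0 z. rewrite addr0 in h. lra. Qed.

Lemma ipZl a x z : ip (a *: x) z = a * ip x z.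
Proof. case: Hip => _ [H _]. by rewrite -[a *: x]addr0 H ip0l addr0. Qed.

Lemma ipNl x z : ip (- x) z = - ip x z.
Proof. by rewrite -scaleN1r ipZl mulN1r. Qed.

Lemma ipBl x y z : ip (x - y) z = ip x z - ip y z.
Proof. by rewrite ipDl ipNl. Qed.

Lemma ipC x y : ip x y = ip y x.
Proof. by case: Hip. Qed.

Lemma ip_norm2 x : `|x| ^+ 2 = ip x x.
Proof.
case: Hip => _ [_ Hn]. rewrite Hn.
case: (leP 0 (ip x x)) => h; first by rewrite sqr_sqrtr.
have : `|x| = 0 by rewrite Hn ltr0_sqrtr.
move/normr0_eq0 => x0. move: h; rewrite x0 ip0l. by rewrite ltxx.
Qed.

Lemma pythag a b : ip a b = 0 -> `|a + b| ^+ 2 = `|a| ^+ 2 + `|b| ^+ 2.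
Proof.
move=> hab. rewrite !ip_norm2 ipDl (ipC a) (ipC b) !ipDl (ipC b a) hab. lra.
Qed.

Lemma orthZ (W : set V) a v : orth_compl ip W v -> orth_compl ip W (a *: v).
Proof. move=> h x Wx. by rewrite ipZl h // mulr0. Qed.

Lemma orthB (W : set V) v1 v2 : orth_compl ip W v1 -> orth_compl ip W v2 ->
  orth_compl ip W (v1 - v2).
Proof. move=> h1 h2 x Wx. by rewrite ipBl h1 // h2 // subr0. Qed.

Variables (W : set V) (m : nat) (HW : finite_dim_subspace W m).

Lemma W0 : W 0.
Proof.
case: HW => b [_ H]. apply/H. exists (fun=> 0).
by rewrite big1 // => i _; rewrite scale0r.
Qed.

Lemma WD x y : W x -> W y -> W (x + y).
Proof.
case: HW => b [_ H] /H [c ->] /H [c' ->]. apply/H.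
exists (fun i => c i + c' i). rewrite -big_split. apply: eq_bigr => i _.
by rewrite scalerDl.
Qed.

Lemma WZ a x : W x -> W (a *: x).
Proof.
case: HW => b [_ H] /H [c ->]. apply/H.
exists (fun i => a * c i). rewrite scaler_sumr. apply: eq_bigr => i _.
by rewrite scalerA.
Qed.

Lemma WB x y : W x -> W y -> W (x - y).
Proof. move=> wx wy. apply: WD => //. rewrite -scaleN1r. exact: WZ. Qed.

Variables (P : V -> V) (HP : is_orth_proj ip W P).

Lemma Puniq v q : W q -> orth_compl ip W (v - q) -> P v = q.
Proof.
move=> Wq hq. have [WP hP] := HP v.
have Wd : W (P v - q) by apply: WB.
have h0 : ip (P v - q) (P v - q) = 0.
  have e : P v - q = (v - q) - (v - P v) by rewrite opprB [RHS]addrC addrA subrK.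
  by rewrite {1}e ipBl hq // hP // subrr.
move: h0; rewrite -ip_norm2 => /eqP; rewrite expf_eq0 /= normr_eq0 subr_eq0.
by move/eqP.
Qed.

Lemma PB u x : P (u - x) = P u - P x.
Proof.
apply: Puniq; first by apply: WB; case: (HP u); case: (HP x).
have -> : u - x - (P u - P x) = (u - P u) - (x - P x).
  by rewrite !opprB addrACA [RHS]addrACA [- P u + _]addrC.
apply: orthB; [exact: (HP u).2 | exact: (HP x).2].
Qed.

Lemma Pnorm z : `|P z| <= `|z|.
Proof.
have h : `|P z + (z - P z)| ^+ 2 = `|P z| ^+ 2 + `|z - P z| ^+ 2.
  apply: pythag. rewrite ipC. apply: (HP z).2. exact: (HP z).1.
rewrite addrC subrK in h.
have := normr_ge0 (P z). have := normr_ge0 z. have := normr_ge0 (z - P z).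
nra.
Qed.

End Aux.

Theorem mainTheorem8 (R : realType)
  (V : completeNormedModType R) (ipV : V -> V -> R)
  (Z : completeNormedModType R) (ipZ : Z -> Z -> R)
  (d : nat) (Y : set 'rV[R]_d)
  (A : 'rV[R]_d -> V -> Z -> R) (f : 'rV[R]_d -> Z -> R)
  (usol : 'rV[R]_d -> V) (r Rc : R)
  (W : set V) (m : nat) (P : V -> V) :
  inner_product_of_norm ipV ->
  inner_product_of_norm ipZ ->
  compact Y ->
  (* A(y) : V -> Z' is a bounded linear isomorphism *)
  (forall y, Y y -> forall (a : R) v1 v2 z,
      A y (a *: v1 + v2) z = a * A y v1 z + A y v2 z) ->
  (forall y, Y y -> forall v, bounded_functional (A y v)) ->
  (forall y, Y y -> forall v1 v2, A y v1 = A y v2 -> v1 = v2) ->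
  (forall y, Y y -> forall phi, bounded_functional phi -> exists v, A y v = phi) ->
  (forall y, Y y -> bounded_functional (f y)) ->
  (* continuity of y |-> A(y) (operator norm) and y |-> f(y) on Y *)
  (forall y, Y y -> forall e : R, 0 < e -> exists2 del : R, 0 < del &
      forall y', Y y' -> `|y - y'| < del ->
        (forall v, dual_norm (fun z => A y' v z - A y v z) <= e * `|v|) /\
        dual_norm (fun z => f y' z - f y z) <= e) ->
  0 < r -> r <= Rc ->
  (* ||A(y)|| <= R and ||A(y)^{-1}|| <= r^{-1} *)
  (forall y, Y y -> forall v, dual_norm (A y v) <= Rc * `|v|) ->
  (forall y, Y y -> forall phi v, bounded_functional phi -> A y v = phi ->
      `|v| <= r^-1 * dual_norm phi) ->
  (* u(y) = A(y)^{-1} f(y) *)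
  (forall y, Y y -> A y (usol y) = f y) ->
  finite_dim_subspace W m ->
  is_orth_proj ipV W P ->
  (exists v, orth_compl ipV W v /\ v <> 0) ->
  let M := usol @` Y in
  forall (u : V) (eps_model eps_noise : R) (eta w ustar : V) (ystar : 'rV[R]_d),
  (dist_set M u <= eps_model%:E)%E ->
  W eta -> `|eta| <= eps_noise ->
  w = P u + eta ->
  orth_compl ipV W (ustar - w) -> Y ystar ->
  (forall v y, orth_compl ipV W (v - w) -> Y y ->
      residual A f ustar ystar <= residual A f v y) ->
  let eps := Rc / r * (eps_model + eps_noise) in
  `|ustar - usol ystar| <= eps /\
  ((`|u - ustar|)%:E <= eps_noise%:E + delta_width ipV W M eps)%E /\
  (eps_noise%:E + delta_width ipV W M eps <= 2%:E * delta_width ipV W M eps)%E /\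
  (M u -> eta = 0 -> ((`|u - ustar|)%:E <= delta_width ipV W M 0)%E).
Proof.
move=> Hip _ _ Alin Abd _ _ _ _ r0 rR ABound Ainv Asol HW HP [e0 [e0o e0n]].
move=> M u em en eta w us ys Hdist Weta Heta Hw Hus Yys Hmin eps.
have Rc0 : 0 < Rc by apply: lt_le_trans rR.
have dist_ge0 : forall v, (0%:E <= dist_set M v)%E.
  by move=> v; apply/ereal_infP => _ [x _ <-]; rewrite lee_fin.
have dist_le : forall v x, M x -> (dist_set M v <= (`|v - x|)%:E)%E.
  by move=> v x Mx; apply: ge_ereal_inf; exists (`|v - x|)%:E => //; exists x.
have dist_approx : forall v e dd, (dist_set M v <= e%:E)%E -> 0 < dd ->
    exists x, M x /\ `|v - x| < e + dd.
  move=> v e dd hv dd0.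
  have : (dist_set M v < (e + dd)%:E)%E.
    by apply: le_lt_trans hv _; rewrite lte_fin ltrDl dd0.
  by case/ereal_inf_lt => _ [x Mx <-]; rewrite lte_fin => h; exists x.
have claim1 : forall em' en', (dist_set M u <= em'%:E)%E -> `|eta| <= en' ->
    `|us - usol ys| <= Rc / r * (em' + en').
  move=> em' en' hd he.
  apply/ler_addgt0Pr => e e0p.
  pose dl := e * r / Rc.
  have dl0 : 0 < dl by rewrite /dl divr_gt0 // mulr_gt0.
  have [_ [[y0 Yy0 <-] hx]] := dist_approx _ _ _ hd dl0.
  have inv : `|us - usol ys| <= r^-1 * residual A f us ys.
    have eqf : A ys (us - usol ys) = (fun z => A ys us z - f ys z).
      apply: funext => z.
      have := Alin ys Yys (-1) (usol ys) us z. rewrite scaleN1r addrC Asol // mulN1r [- _ + _]addrC. done.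
    apply: (Ainv ys Yys _ _ _ eqf). rewrite -eqf. exact: Abd.
  pose x := usol y0.
  pose v := x + (w - P x).
  have hres : residual A f us ys <= residual A f v y0.
    apply: Hmin => //.
    have -> : v - w = x - P x by rewrite /v addrCA [w + _]addrC addrK.
    exact: (HP x).2.
  have hv : residual A f v y0 <= Rc * `|v - x|.
    have -> : residual A f v y0 = dual_norm (A y0 (v - x)).
      rewrite /residual; congr dual_norm; apply: funext => z.
      have := Alin y0 Yy0 (-1) x v z. rewrite scaleN1r addrC /x Asol // mulN1r [- _ + _]addrC. done.
    exact: ABound.
  have hvx : `|v - x| <= `|u - x| + en'.
    have -> : v - x = P (u - x) + eta.
      rewrite /v addrC addKr Hw (@PB _ _ _ Hip _ _ HW _ HP) addrAC //.
    apply: le_trans (ler_normD _ _) _. apply: lerD => //. exact: (@Pnorm _ _ _ Hip _ _ HP).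
  have K0 : 0 < Rc / r by rewrite divr_gt0.
  have Kd : Rc / r * dl = e by rewrite /dl; field; rewrite ?gt_eqF.
  have h1 : `|us - usol ys| <= Rc / r * (`|u - x| + en').
    apply: le_trans inv _. rewrite [Rc / r]mulrC -mulrA.
    apply: ler_wpM2l; first by rewrite invr_ge0 ltW.
    apply: le_trans hres _. apply: le_trans hv _.
    by apply: ler_wpM2l; first exact: ltW.
  have h2 : Rc / r * `|u - x| <= Rc / r * (em' + dl).
    by apply: ler_wpM2l; [exact: ltW | exact: ltW].
  lra.
have Pus : P us = w.
  apply: (@Puniq _ _ _ Hip _ _ HW _ HP) => //. rewrite Hw.
  apply: (@WD _ _ _ _ HW) => //. exact: (HP u).1.
have em0 : 0 <= em by rewrite -lee_fin; apply: le_trans (dist_ge0 u) Hdist.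
have en0 : 0 <= en by apply: le_trans Heta.
have K1 : 1 <= Rc / r by rewrite ler_pdivlMr // mul1r.
have epsge : em + en <= eps by rewrite /eps; apply: ler_peMl => //; lra.
have c1 : `|us - usol ys| <= eps := claim1 em en Hdist Heta.
have orth_ut : orth_compl ipV W (u + eta - us).
  have -> : u + eta - us = (u - P u) - (us - (P u + eta)) by rewrite opprB !addrA subrK.
  apply: (@orthB _ _ _ Hip); first exact: (HP u).2.
  rewrite -Hw -Pus. exact: (HP us).2.
have Mys : M (usol ys) by exists ys.
have fut : fattening M eps (u + eta).
  change (dist_set M (u + eta)%R <= eps%:E)%E.
  apply/lee_addgt0Pr => e e0p.
  have [x [Mx hx]] := dist_approx _ _ _ Hdist e0p.
  apply: le_trans (dist_le _ _ Mx) _. rewrite -EFinD lee_fin.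
  have : `|u + eta - x| <= `|u - x| + `|eta| by rewrite addrAC; apply: ler_normD.
  lra.
have fus : fattening M eps us.
  change (dist_set M us <= eps%:E)%E.
  by apply: le_trans (dist_le _ _ Mys) _; rewrite lee_fin.
have delta_ub : forall sg a b, fattening M sg a -> fattening M sg b ->
    orth_compl ipV W (a - b) -> ((`|a - b|)%:E <= delta_width ipV W M sg)%E.
  move=> sg a b fa fb oab. apply: le_ereal_sup_tmp.
  exists ((`|a - b|)%:E) => //. by exists a, b.
have c2 : ((`|u - us|)%:E <= en%:E + delta_width ipV W M eps)%E.
  have e1 : u - us = (u + eta - us) + (- eta) by rewrite addrAC addrK.
  have h : `|u - us| <= `|eta| + `|u + eta - us|.
    rewrite e1. have := ler_normD (u + eta - us) (- eta). rewrite normrN. lra.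
  apply: (@le_trans _ _ (en%:E + (`|u + eta - us|)%:E)).
    rewrite -EFinD lee_fin. lra.
  apply: leeD2l. exact: delta_ub.
have [x0 [Mx0 _]] := dist_approx _ _ _ Hdist ltr01.
have ne0 : 0 < `|e0| by rewrite normr_gt0; apply/eqP.
have eps0 : 0 <= eps by lra.
pose s := eps / `|e0|.
have hd : (eps%:E <= delta_width ipV W M eps)%E.
  have e2 : `|x0 + s *: e0 - x0| = eps.
    by rewrite addrC addKr normrZ ger0_norm ?divr_ge0 // mulfVK // gt_eqF.
  apply: (@le_trans _ _ (`|x0 + s *: e0 - x0|)%:E); first by rewrite e2.
  apply: delta_ub.
  - change (dist_set M (x0 + s *: e0)%R <= eps%:E)%E.
    by apply: le_trans (dist_le _ _ Mx0) _; rewrite e2.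
  - change (dist_set M x0 <= eps%:E)%E.
    by apply: le_trans (dist_le _ _ Mx0) _; rewrite subrr normr0 lee_fin.
  - rewrite addrC addKr. exact: (@orthZ _ _ _ Hip).
split=> //; split=> //; split.
  move: hd. case: (delta_width ipV W M eps) => [dv | | ] /=.
  - rewrite !lee_fin => h. lra.
  - move=> _. by rewrite addey // muleC gt0_mulye // lte_fin.
  - by rewrite leeNy_eq.
move=> Mu eta0.
have hus0 : `|us - usol ys| <= 0.
  have := claim1 0 0 _ _.
  rewrite addr0 mulr0; apply.
    by apply: le_trans (dist_le u u Mu) _; rewrite subrr normr0 lee_fin.
  by rewrite eta0 normr0.
have eus : us = usol ys.
  by apply/eqP; rewrite -subr_eq0 -normr_eq0 eq_le hus0 normr_ge0.
apply: delta_ub.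
- change (dist_set M u <= 0%:E)%E.
  by apply: le_trans (dist_le u u Mu) _; rewrite subrr normr0 lee_fin.
- change (dist_set M us <= 0%:E)%E. rewrite eus.
  by apply: le_trans (dist_le _ _ Mys) _; rewrite subrr normr0 lee_fin.
- by move: orth_ut; rewrite eta0 addr0.
Qed.
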